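(* For every integer $n\geq2$, the $V^{n}$-move is not an unknotting operation on welded knots; that is, there is a welded knot (for instance the trefoil knot) which is not $V^{n}$-equivalent to the unknot.
   Context: A virtual link diagram is the image of an immersion of finitely many ordered, oriented circles in the plane with transverse double points, each a classical crossing (with over/under information) or a virtual crossing. Welded Reidemeister moves are R1–R3, the virtual moves VR1–VR4, and the OC move (a strand passing over two strands at classical crossings may slide across a virtual crossing of those two strands); a welded knot is an equivalence class of one-component diagrams under these moves. The $V^{n}$-move: inside a disk the diagram consists of two arcs $a,b$ oriented in the same direction; on one side they are parallel without crossings; on the other side the tangle is the $2$-braid word $(\sigma\tau)^{n}$, where $\sigma$ is a classical crossing with $b$ over $a$ and $\tau$ a virtual crossing (so $n$ classical crossings, all with $b$ over and of the same sign, alternating with $n$ virtual crossings). Two welded knots are $V^{n}$-equivalent if diagrams are related by $V^n$-moves and welded Reidemeister moves. A local move is an unknotting operation on welded knots if every welded knot is equivalent to the unknot under that move and welded Reidemeister moves. *)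

(* Defs.v *)
(* Welded knots are modelled by Gauss words
   (Gauss diagrams of one-component virtual diagrams), which forget virtual
   crossings; virtual moves VR1-VR4 and detour moves are thereby absorbed. *)
From mathcomp Require Import all_boot.
Set Implicit Arguments. Unset Strict Implicit. Unset Printing Implicit Defensive.

(* A letter of a Gauss word: (crossing label, over?, sign).
   over = true : the knot passes over the crossing at this point;
   sign = true / false encodes the two local writhes. *)
Definition letter := (nat * bool * bool)%type.
Definition lab (x : letter) : nat := x.1.1.
Definition isover (x : letter) : bool := x.1.2.
Definition sgn (x : letter) : bool := x.2.
Definition labels (w : seq letter) : seq nat := map lab w.

(* Words are read cyclically
   (rotation is one of the moves below). The empty word is the unknot. *)
Definition gauss_word (w : seq letter) : Prop :=
  forall a, a \in labels w -> exists e : bool,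
    [/\ count_mem (a, true, e) w = 1%N, count_mem (a, false, e) w = 1%N
      & count (fun x => lab x == a) w = 2%N].

(* T = top strand, M = middle, B = bottom; x = T over M, y = T over B,
   z = M over B.  The flag a_i records the order of the two crossings on
   strand i; the condition  e_ij + a_i + a_j  (mod 2) independent of the pair
   characterizes the realizable sign/order configurations. *)
Definition r3_config (T M B : seq letter) : Prop :=
  exists (x y z : nat) (ex ey ez a1 a2 a3 : bool),
    [/\ uniq [:: x; y; z],
        T = (if a1 then rev else id) [:: (x, true, ex); (y, true, ey)],
        M = (if a2 then rev else id) [:: (x, false, ex); (z, true, ez)]
      & B = (if a3 then rev else id) [:: (y, false, ey); (z, false, ez)]] /\
    ex (+) a1 (+) a2 = ey (+) a1 (+) a3 /\
    ey (+) a1 (+) a3 = ez (+) a2 (+) a3.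

Inductive welded_step : seq letter -> seq letter -> Prop :=
| ws_rot (u v : seq letter) : welded_step (u ++ v) (v ++ u)
| ws_relabel (w : seq letter) (f : nat -> nat) : injective f ->
    welded_step w (map (fun x => (f (lab x), isover x, sgn x)) w)
| ws_R1 (u v : seq letter) (a : nat) (o e : bool) :
    a \notin labels (u ++ v) ->
    welded_step (u ++ v) (u ++ [:: (a, o, e); (a, ~~ o, e)] ++ v)
| ws_R2 (u1 v u2 : seq letter) (a b : nat) (e : bool) (P : seq letter) :
    a \notin labels (u1 ++ v ++ u2) -> b \notin labels (u1 ++ v ++ u2) ->
    a != b ->
    (P = [:: (a, false, e); (b, false, ~~ e)] \/
     P = [:: (b, false, ~~ e); (a, false, e)]) ->
    welded_step (u1 ++ v ++ u2)
                (u1 ++ [:: (a, true, e); (b, true, ~~ e)] ++ v ++ P ++ u2)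
| ws_R3 (u1 X1 u2 X2 u3 X3 u4 T M B : seq letter) :
    r3_config T M B -> perm_eq [:: X1; X2; X3] [:: T; M; B] ->
    welded_step (u1 ++ X1 ++ u2 ++ X2 ++ u3 ++ X3 ++ u4)
                (u1 ++ rev X1 ++ u2 ++ rev X2 ++ u3 ++ rev X3 ++ u4)
| ws_OC (u v : seq letter) (a b : nat) (e f : bool) :
    welded_step (u ++ (a, true, e) :: (b, true, f) :: v)
                (u ++ (b, true, f) :: (a, true, e) :: v).

(* The V^n-move: on arc "a" insert n consecutive under-crossings c_1..c_n,
   on arc "b" the corresponding over-crossings in the same order, all of the
   same sign e (virtual crossings are invisible in Gauss words). Taking o
   either way covers both orders of the arcs along the knot. *)
Inductive Vn_step (n : nat) : seq letter -> seq letter -> Prop :=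
| vn_move (u1 v u2 : seq letter) (c : seq nat) (o e : bool) :
    size c = n -> uniq c -> all (fun a => a \notin labels (u1 ++ v ++ u2)) c ->
    Vn_step n (u1 ++ v ++ u2)
      (u1 ++ [seq (a, o, e) | a <- c] ++ v ++ [seq (a, ~~ o, e) | a <- c] ++ u2).

Inductive eq_closure (R : seq letter -> seq letter -> Prop)
  : seq letter -> seq letter -> Prop :=
| ec_refl w : eq_closure R w w
| ec_step w w' : R w w' -> eq_closure R w w'
| ec_sym w w' : eq_closure R w w' -> eq_closure R w' w
| ec_trans w1 w2 w3 : eq_closure R w1 w2 -> eq_closure R w2 w3 -> eq_closure R w1 w3.

Definition Vn_equivalent (n : nat) : seq letter -> seq letter -> Prop :=
  eq_closure (fun w w' => welded_step w w' \/ Vn_step n w w').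

(* Main.v *)
Set Warnings "-notation-overridden -ambiguous-paths -deprecated-since-mathcomp-2.4.0 -deprecated-syntactic-definition -deprecated".
Require Import Defs.
From mathcomp Require Import all_boot all_algebra ring zify.
Set Implicit Arguments. Unset Strict Implicit. Unset Printing Implicit Defensive.
Import GRing.Theory.
Section Alg.
Local Open Scope ring_scope.
Variable R : comRingType.
Definition vec := (R * R)%type.
Definition om (x y : vec) : R := x.1 * y.2 - x.2 * y.1.
Definition sg (b : bool) : R := if b then 1 else -1.
Definition tv (b : bool) (y x : vec) : vec :=
  (x.1 + sg b * om x y * y.1, x.2 + sg b * om x y * y.2).
Definition vneg (x : vec) : vec := (- x.1, - x.2).
Definition eqv (x y : vec) : bool := (x == y) || (x == vneg y).

Lemma tv_inv b y x : tv (~~ b) y (tv b y x) = x.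
Proof. case: x y => x1 x2 [y1 y2]; case: b; rewrite /tv /om /sg /=; congr (_, _); ring. Qed.
Lemma tv_neg_y b y x : tv b (vneg y) x = tv b y x.
Proof. case: x y => x1 x2 [y1 y2]; case: b; rewrite /tv /om /sg /=; congr (_, _); ring. Qed.
Lemma tv_neg_x b y x : tv b y (vneg x) = vneg (tv b y x).
Proof. case: x y => x1 x2 [y1 y2]; case: b; rewrite /tv /vneg /om /sg /=; congr (_, _); ring. Qed.
Lemma tv_self b y : tv b y y = y.
Proof. case: y => y1 y2; case: b; rewrite /tv /om /sg /=; congr (_, _); ring. Qed.
Lemma vnegK x : vneg (vneg x) = x.
Proof. case: x => x1 x2; rewrite /vneg /= !opprK. done. Qed.
Lemma tv_distr b1 b2 t m x :
  tv b1 t (tv b2 m x) = tv b2 (tv b1 t m) (tv b1 t x).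
Proof.
case: x t m => x1 x2 [t1 t2] [m1 m2]; case: b1; case: b2;
  rewrite /tv /om /sg /=; congr (_, _); ring.
Qed.
Lemma tv_iter b y x k :
  iter k (tv b y) x = (x.1 + k%:R * (sg b * om x y) * y.1, x.2 + k%:R * (sg b * om x y) * y.2).
Proof.
case: x y => x1 x2 [y1 y2]; elim: k => [|k IH] /=.
  by rewrite !mul0r !addr0.
rewrite IH /tv /om /=; congr (_, _); rewrite -?[k.+1]addn1 natrD; ring.
Qed.
Lemma tv_fix b y x : eqv y x -> tv b y x = x.
Proof. by case/orP=> /eqP ->; rewrite ?tv_neg_y tv_self. Qed.
Lemma eqv_refl x : eqv x x.
Proof. by rewrite /eqv eqxx. Qed.
Lemma eqv_negr x y : eqv x (vneg y) = eqv x y.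
Proof. by rewrite /eqv vnegK orbC. Qed.
Lemma eqv_negl x y : eqv (vneg x) y = eqv x y.
Proof.
rewrite /eqv; apply/idP/idP => /orP[] /eqP E.
- by rewrite -[x]vnegK E eqxx orbT.
- by rewrite -[x]vnegK E vnegK eqxx.
- by rewrite E eqxx orbT.
- by rewrite E vnegK eqxx.
Qed.
Lemma eqv_sym x y : eqv x y = eqv y x.
Proof.
by apply/idP/idP => /orP[] /eqP ->; rewrite ?eqv_negl ?eqv_negr eqv_refl.
Qed.
Lemma eqv_trans x y z : eqv x y -> eqv y z -> eqv x z.
Proof. by case/orP=> /eqP -> ; rewrite ?eqv_negl. Qed.
Lemma eqv_tv b y y' x : eqv y y' -> tv b y x = tv b y' x.
Proof. by case/orP=> /eqP ->; rewrite ?tv_neg_y. Qed.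
Lemma tv_inv' b y x : tv b y (tv (~~ b) y x) = x.
Proof. by rewrite -{1}[b]negbK tv_inv. Qed.
Lemma eqv_tv_bij b t d Z : eqv (tv b t d) Z = eqv d (tv (~~ b) t Z).
Proof.
apply/idP/idP => /orP[] /eqP E.
- by rewrite -E tv_inv eqv_refl.
- by rewrite -[Z]vnegK -E -tv_neg_x tv_inv eqv_negr eqv_refl.
- by rewrite E tv_inv' eqv_refl.
- by rewrite E tv_neg_x tv_inv' eqv_negl eqv_refl.
Qed.

Fixpoint run (col : nat -> vec) (c : vec) (w : seq letter) : option vec :=
  match w with
  | [::] => Some c
  | x :: w' => if isover x then (if eqv c (col (lab x)) then run col c w' else None)
               else run col (tv (sgn x) (col (lab x)) c) w'
  end.

Lemma run_cat col c u v :
  run col c (u ++ v) = obind (fun d => run col d v) (run col c u).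
Proof.
elim: u c => [|x u IH] c //=.
by case: (isover x); rewrite ?IH //; case: (eqv _ _).
Qed.

Lemma run_ext col col' c w : (forall a, a \in labels w -> col a = col' a) ->
  run col c w = run col' c w.
Proof.
elim: w c => [|x w IH] c //= H.
have Hw : forall a, a \in labels w -> col a = col' a.
  by move=> a Ha; apply: H; rewrite inE Ha orbT.
rewrite H ?inE ?eqxx //; case: (isover x); rewrite IH //; by case: (eqv _ _).
Qed.

Lemma run_neg col c w : run col (vneg c) w = omap vneg (run col c w).
Proof.
elim: w c => [|x w IH] c //=.
case: (isover x); first by rewrite eqv_negl; case: (eqv _ _).
by rewrite tv_neg_x IH.
Qed.

Lemma const_run col d w e : (forall x, x \in w -> eqv (col (lab x)) d) ->
  run col d w = Some e -> e = d.
Proof.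
elim: w => [|x w IH] /= H; first by case.
have Hx : eqv (col (lab x)) d by apply: H; rewrite inE eqxx.
have Hw : forall y, y \in w -> eqv (col (lab y)) d by move=> y Hy; apply: H; rewrite inE Hy orbT.
case: (isover x).
  by rewrite eqv_sym Hx; apply: IH.
by rewrite tv_fix //; apply: IH.
Qed.

Definition NT col c w := has (fun x => ~~ eqv (col (lab x)) c) w.
Definition Closes col c w := if run col c w is Some d then eqv d c else false.
Definition Col w := exists col c, Closes col c w && NT col c w.

Lemma moved col c p d : run col c p = Some d -> ~~ eqv d c -> NT col c p.
Proof.
move=> H Hd; apply/negPn/negP => /hasPn Hn.
have := const_run (fun x Hx => negbNE (Hn x Hx)) H.
by move=> E; rewrite E eqv_refl in Hd.
Qed.

Lemma col_rot u v : Col (u ++ v) -> Col (v ++ u).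
Proof.
move=> [col [c /andP[Hc Hnt]]]; move: Hc; rewrite /Closes run_cat.
case Hu: (run col c u) => [e|] //=.
case Hv: (run col e v) => [d|] // Hdc.
exists col, e; apply/andP; split.
  rewrite /Closes run_cat Hv /=.
  by case/orP: Hdc => /eqP ->; rewrite ?run_neg Hu /= ?eqv_negl eqv_refl.
apply/negPn/negP => /hasPn Hn.
have Hall : forall x, x \in v ++ u -> eqv (col (lab x)) e by move=> x Hx; exact: negbNE (Hn x Hx).
have De : d = e by apply: (const_run _ Hv) => x Hx; apply: Hall; rewrite mem_cat Hx.
move/hasP: Hnt => [x0 Hx0 /negP]; apply.
apply: (eqv_trans (Hall x0 _)); first by rewrite mem_cat orbC -mem_cat.
by rewrite -De.
Qed.
Definition rl (f : nat -> nat) (w : seq letter) :=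
  map (fun x => (f (lab x), isover x, sgn x)) w.

Lemma run_rl col f c w : run col c (rl f w) = run (fun a => col (f a)) c w.
Proof. by elim: w c => [|x w IH] c //=; rewrite /lab /isover /sgn /= -/(lab x) -/(isover x) -/(sgn x); case: (isover x); rewrite IH. Qed.

Lemma col_rl_back f w : Col (rl f w) -> Col w.
Proof.
move=> [col [c /andP[H1 H2]]]; exists (fun a => col (f a)), c.
by move: H1 H2; rewrite /Closes /NT run_rl has_map => -> .
Qed.

Lemma col_rl_fwd f w : injective f -> Col w -> Col (rl f w).
Proof.
move=> injf [col [c /andP[H1 H2]]].
pose col' b := col (nth 0%N (labels w) (index b (map f (labels w)))).
have Hc : forall a, a \in labels w -> col' (f a) = col a.
  by move=> a Ha; rewrite /col' index_map // nth_index.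
exists col', c; apply/andP; split.
  by rewrite /Closes run_rl -(run_ext (col := col)) // => a Ha; rewrite Hc.
rewrite /NT has_map; case/hasP: H2 => x Hx Hp; apply/hasP; exists x => //=.
by rewrite /lab /= Hc //; apply: map_f.
Qed.

Lemma col_oc u v x y : isover x -> isover y ->
  Col (u ++ x :: y :: v) -> Col (u ++ y :: x :: v).
Proof.
move=> Hx Hy [col [c /andP[H1 H2]]]; exists col, c; apply/andP; split.
  move: H1; rewrite /Closes !run_cat; case: (run col c u) => [d|] //=.
  rewrite Hx Hy; by case: (eqv d (col (lab x))); case: (eqv d (col (lab y))).
move: H2; rewrite /NT !has_cat /=.
by case: (has _ u); case: (~~ _); case: (~~ _).
Qed.
Lemma fresh_lab a w x : a \notin labels w -> x \in w -> (lab x == a) = false.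
Proof. by move=> Ha Hx; apply/eqP => E; rewrite -E (map_f lab Hx) in Ha. Qed.

Lemma labels_cat u v : labels (u ++ v) = labels u ++ labels v.
Proof. exact: map_cat. Qed.

Lemma notin_cat a u v : a \notin labels (u ++ v) -> a \notin labels u /\ a \notin labels v.
Proof. by rewrite labels_cat mem_cat negb_or => /andP. Qed.

Lemma col_R1_fwd u v a o e : a \notin labels (u ++ v) ->
  Col (u ++ v) -> Col (u ++ [:: (a, o, e); (a, ~~ o, e)] ++ v).
Proof.
move=> Ha [col [c /andP[H1 H2]]].
have [Hu Hv] := notin_cat Ha.
move: H1; rewrite /Closes run_cat; case Ed: (run col c u) => [d|] //= H1.
pose col' b := if b == a then d else col b.
have Ec : forall w, a \notin labels w -> forall c', run col' c' w = run col c' w.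
  move=> w Hw c'; apply: run_ext => b Hb; rewrite /col'.
  by case: eqP => // E; move: Hw; rewrite -E Hb.
exists col', c; apply/andP; split.
  rewrite /Closes run_cat Ec // Ed /= /col' /lab /isover /sgn /= eqxx.
  by case: o; rewrite /= ?eqv_refl tv_self ?eqv_refl Ec.
move: H2; rewrite /NT !has_cat => /orP[] H.
  apply/orP; left; case/hasP: H => x Hx Hp; apply/hasP; exists x => //.
  by rewrite /col' (fresh_lab Hu Hx).
apply/orP; right; rewrite /=; do 2 (apply/orP; right).
case/hasP: H => x Hx Hp; apply/hasP; exists x => //.
by rewrite /col' (fresh_lab Hv Hx).
Qed.

Lemma col_R1_back u v a o e :
  Col (u ++ [:: (a, o, e); (a, ~~ o, e)] ++ v) -> Col (u ++ v).
Proof.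
move=> [col [c /andP[H1 H2]]].
move: H1; rewrite /Closes run_cat; case Ed: (run col c u) => [d|] // H1.
have H1' : is_true (match run col d ([:: (a, o, e); (a, ~~ o, e)] ++ v) with Some r => eqv r c | None => false end) by exact H1.
have blk : forall o' r, run col d ([:: (a, o', e); (a, ~~ o', e)] ++ v) = Some r ->
   run col d v = Some r /\ eqv d (col a).
  move=> o' r; rewrite /lab /isover /sgn /=; case: o' => /=.
    by case E: (eqv d (col a)) => //; rewrite tv_fix // eqv_sym.
  case E: (eqv (tv e (col a) d) (col a)) => // H.
  have Hs : eqv (col a) (tv e (col a) d) by rewrite eqv_sym.
  have E' : tv e (col a) d = d.
    by have := tv_inv e (col a) d; rewrite tv_fix.
  by rewrite E' in H E.
case Er: (run col d ([:: (a, o, e); (a, ~~ o, e)] ++ v)) H1' => [r|] // Hr.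
have [Hv Hda] := blk o r Er.
exists col, c; apply/andP; split; first by rewrite /Closes run_cat Ed /= Hv.
move: H2; rewrite /NT !has_cat => /orP[H|H]; first by rewrite H.
rewrite /= in H; case/orP: H => [/orP[H|/orP[H|//]]|H]; last by rewrite H orbT.
all: apply/orP; left; apply: (moved Ed); apply/negP => Hdc; move/negP: H; apply.
all: by apply: (eqv_trans _ Hdc); rewrite eqv_sym.
Qed.
Lemma run_cat_some col c u v d : run col c u = Some d -> run col c (u ++ v) = run col d v.
Proof. by move=> H; rewrite run_cat H. Qed.
Lemma run_cat_none col c u v : run col c u = None -> run col c (u ++ v) = None.
Proof. by move=> H; rewrite run_cat H. Qed.

Lemma NT_sub col col' c w w' : {subset w <= w'} ->
  (forall x, x \in w -> col' (lab x) = col (lab x)) -> NT col c w -> NT col' c w'.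
Proof.
move=> Hs He /hasP[x Hx Hp]; apply/hasP; exists x; first exact: Hs.
by rewrite He.
Qed.

Lemma run_overs2 col d a b e f w :
  run col d ([:: (a, true, e); (b, true, f)] ++ w) =
  if eqv d (col a) && eqv d (col b) then run col d w else None.
Proof. by rewrite /= /lab /isover /=; case: (eqv d (col a)). Qed.

Lemma run_P col g a b e P w : eqv (col a) (col b) ->
  (P = [:: (a, false, e); (b, false, ~~ e)] \/ P = [:: (b, false, ~~ e); (a, false, e)]) ->
  run col g (P ++ w) = run col g w.
Proof.
move=> Hab [] ->; rewrite /= /lab /isover /sgn /= (eqv_tv _ _ Hab).
  by rewrite tv_inv.
by rewrite tv_inv'.
Qed.

Lemma col_R2_fwd u1 v u2 a b e P :
  a \notin labels (u1 ++ v ++ u2) -> b \notin labels (u1 ++ v ++ u2) ->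
  (P = [:: (a, false, e); (b, false, ~~ e)] \/ P = [:: (b, false, ~~ e); (a, false, e)]) ->
  Col (u1 ++ v ++ u2) ->
  Col (u1 ++ [:: (a, true, e); (b, true, ~~ e)] ++ v ++ P ++ u2).
Proof.
move=> Ha Hb HP [col [c /andP[H1 H2]]].
move: H1; rewrite /Closes; case Ed: (run col c u1) => [d|]; last by rewrite run_cat_none.
rewrite (run_cat_some _ Ed).
case Eg: (run col d v) => [g|]; last by rewrite run_cat_none.
rewrite (run_cat_some _ Eg) => H1.
pose col' x := if (x == a) || (x == b) then d else col x.
have Ec : forall w, {subset w <= u1 ++ v ++ u2} -> forall c', run col' c' w = run col c' w.
  move=> w Hw c'; apply: run_ext => x /mapP[y Hy ->]; rewrite /col'.
  by rewrite (fresh_lab Ha (Hw _ Hy)) (fresh_lab Hb (Hw _ Hy)).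
have Hu1 : {subset u1 <= u1 ++ v ++ u2} by move=> x Hx; rewrite mem_cat Hx.
have Hv : {subset v <= u1 ++ v ++ u2} by move=> x Hx; rewrite !mem_cat Hx orbT.
have Hu2 : {subset u2 <= u1 ++ v ++ u2} by move=> x Hx; rewrite !mem_cat Hx !orbT.
exists col', c; apply/andP; split.
  rewrite /Closes (run_cat_some _ (etrans (Ec _ Hu1 c) Ed)) run_overs2.
  rewrite /col' !eqxx orbT /= eqv_refl (run_cat_some _ (etrans (Ec _ Hv d) Eg)).
  rewrite (@run_P col' g a b e P u2 _ HP); last by rewrite /col' !eqxx orbT eqv_refl.
  by rewrite Ec.
apply: NT_sub H2.
  by move=> x; rewrite !mem_cat /= !inE => /orP[->|/orP[->|->]]; rewrite ?orbT.
move=> x Hx; rewrite /col'.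
by rewrite (fresh_lab Ha Hx) (fresh_lab Hb Hx).
Qed.

Lemma col_R2_back u1 v u2 a b e P :
  (P = [:: (a, false, e); (b, false, ~~ e)] \/ P = [:: (b, false, ~~ e); (a, false, e)]) ->
  Col (u1 ++ [:: (a, true, e); (b, true, ~~ e)] ++ v ++ P ++ u2) ->
  Col (u1 ++ v ++ u2).
Proof.
move=> HP [col [c /andP[H1 H2]]].
move: H1; rewrite /Closes; case Ed: (run col c u1) => [d|]; last by rewrite run_cat_none.
rewrite (run_cat_some _ Ed) run_overs2.
case Eab: (eqv d (col a) && eqv d (col b)) => //.
move/andP: Eab => [Ea Eb].
have Hab : eqv (col a) (col b) by rewrite eqv_sym in Ea; apply: eqv_trans Ea Eb.
case Eg: (run col d v) => [g|]; last by rewrite run_cat_none.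
rewrite (run_cat_some _ Eg) (run_P _ _ Hab HP) => H1.
exists col, c; apply/andP; split.
  by rewrite /Closes (run_cat_some _ Ed) (run_cat_some _ Eg).
move: H2; rewrite /NT !has_cat => /orP[H|/orP[H|/orP[H|/orP[H|H]]]];
  rewrite ?H ?orbT //.
- apply/orP; left; apply: (moved Ed); apply/negP => Hdc; move: H.
  rewrite /= /lab /= orbF => /orP[] /negP; apply.
    by apply: (eqv_trans _ Hdc); rewrite eqv_sym.
  by apply: (eqv_trans _ Hdc); rewrite eqv_sym.
- apply/orP; left; apply: (moved Ed); apply/negP => Hdc; move: H.
  have Ha' : eqv (col a) c by apply: (eqv_trans _ Hdc); rewrite eqv_sym.
  have Hb' : eqv (col b) c by apply: (eqv_trans _ Hdc); rewrite eqv_sym.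
  by case: HP => ->; rewrite /= /lab /= Ha' Hb'.
Qed.
Lemma run_overs col d (c : seq nat) e w :
  run col d ([seq (a, true, e) | a <- c] ++ w) =
  if all (fun a => eqv d (col a)) c then run col d w else None.
Proof.
elim: c => [|a c IH] //=; rewrite /lab /isover /=.
by case: (eqv d (col a)).
Qed.

Lemma run_unders col h g (c : seq nat) e w : (forall a, a \in c -> eqv (col a) h) ->
  run col g ([seq (a, false, e) | a <- c] ++ w) = run col (iter (size c) (tv e h) g) w.
Proof.
elim: c g => [|a c IH] g //= H.
rewrite /lab /isover /sgn /= IH; last by move=> b Hb; apply: H; rewrite inE Hb orbT.
by rewrite (eqv_tv _ _ (H a (mem_head a c))) -iterSr iterS.
Qed.

Lemma run_unders_some col g (c : seq nat) e :
  exists g', run col g [seq (a, false, e) | a <- c] = Some g'.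
Proof.
elim: c g => [|a c IH] g /=; first by exists g.
exact: IH.
Qed.

Section VnSec.
Variable n : nat.
Hypothesis Hn : n%:R = 0 :> R.

Lemma tv_iter_n e h g : iter n (tv e h) g = g.
Proof. by rewrite tv_iter Hn !mul0r !addr0; case: g. Qed.

Lemma col_Vn_fwd u1 v u2 (c : seq nat) o e :
  size c = n -> all (fun a => a \notin labels (u1 ++ v ++ u2)) c ->
  Col (u1 ++ v ++ u2) ->
  Col (u1 ++ [seq (a, o, e) | a <- c] ++ v ++ [seq (a, ~~ o, e) | a <- c] ++ u2).
Proof.
move=> Hs Hf [col [c0 /andP[H1 H2]]].
move: H1; rewrite /Closes; case Ed: (run col c0 u1) => [d|]; last by rewrite run_cat_none.
rewrite (run_cat_some _ Ed).
case Eg: (run col d v) => [g|]; last by rewrite run_cat_none.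
rewrite (run_cat_some _ Eg) => H1.
have [dd Hdd] : exists dd, dd = if o then d else g by eexists.
pose col' x := if x \in c then dd else col x.
have Hfr : forall x, x \in u1 ++ v ++ u2 -> lab x \notin c.
  move=> x Hx; apply/negP => Hc; move/allP: Hf => /(_ _ Hc); rewrite (map_f lab Hx) //.
have Ec : forall w, {subset w <= u1 ++ v ++ u2} -> forall c', run col' c' w = run col c' w.
  move=> w Hw c'; apply: run_ext => x /mapP[y Hy ->]; rewrite /col'.
  by rewrite (negbTE (Hfr _ (Hw _ Hy))).
have Hu1 : {subset u1 <= u1 ++ v ++ u2} by move=> x Hx; rewrite mem_cat Hx.
have Hv : {subset v <= u1 ++ v ++ u2} by move=> x Hx; rewrite !mem_cat Hx orbT.
have Hu2 : {subset u2 <= u1 ++ v ++ u2} by move=> x Hx; rewrite !mem_cat Hx !orbT.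
exists col', c0; apply/andP; split.
  rewrite /Closes (run_cat_some _ (etrans (Ec _ Hu1 c0) Ed)).
  case: o Hdd => /= Hdd; subst dd.
    rewrite run_overs.
    have -> : all (fun a => eqv d (col' a)) c by apply/allP => a Ha; rewrite /col' Ha eqv_refl.
    rewrite (run_cat_some _ (etrans (Ec _ Hv d) Eg)) (run_unders (h := d)).
      by rewrite Hs tv_iter_n Ec.
    by move=> a Ha; rewrite /col' Ha eqv_refl.
  rewrite (run_unders (h := g)); last by move=> a Ha; rewrite /col' Ha eqv_refl.
  rewrite Hs tv_iter_n (run_cat_some _ (etrans (Ec _ Hv d) Eg)) run_overs.
  have -> : all (fun a => eqv g (col' a)) c by apply/allP => a Ha; rewrite /col' Ha eqv_refl.
  by rewrite Ec.
apply: NT_sub H2.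
  by move=> x; rewrite !mem_cat => /orP[->|/orP[->|->]]; rewrite ?orbT.
by move=> x Hx; rewrite /col' (negbTE (Hfr _ Hx)).
Qed.

Lemma col_Vn_back u1 v u2 (c : seq nat) o e :
  size c = n ->
  Col (u1 ++ [seq (a, o, e) | a <- c] ++ v ++ [seq (a, ~~ o, e) | a <- c] ++ u2) ->
  Col (u1 ++ v ++ u2).
Proof.
move=> Hs [col [c0 /andP[H1 H2]]].
move: H1; rewrite /Closes; case Ed: (run col c0 u1) => [d|]; last by rewrite run_cat_none.
rewrite (run_cat_some _ Ed).
case: o H2 => /= H2.
{ rewrite run_overs; case Ea: (all _ c) => //.
  case Eg: (run col d v) => [g|]; last by rewrite run_cat_none.
  rewrite (run_cat_some _ Eg) (run_unders (h := d)); last first.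
    by move=> a Ha; rewrite eqv_sym; move/allP: Ea; apply.
  rewrite Hs tv_iter_n => H1.
  exists col, c0; apply/andP; split.
    by rewrite /Closes (run_cat_some _ Ed) (run_cat_some _ Eg).
  move: H2; rewrite /NT !has_cat => /orP[->//|/orP[H|/orP[->|/orP[H|->]]]]; rewrite ?orbT //.
  all: apply/orP; left; apply: (moved Ed); apply/negP => Hdc.
  all: case/hasP: H => x /mapP[a Ha ->] /negP; apply; rewrite /lab /=.
  all: by apply: (eqv_trans _ Hdc); rewrite eqv_sym; move/allP: Ea; apply. }
have [d1 Ed1] := run_unders_some col d c e.
rewrite (run_cat_some _ Ed1).
case Eg: (run col d1 v) => [g|]; last by rewrite run_cat_none.
rewrite (run_cat_some _ Eg) run_overs; case Ea: (all _ c) => // H1.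
have Hca : forall a, a \in c -> eqv (col a) g by move=> a Ha; rewrite eqv_sym; move/allP: Ea; apply.
have Ed1' := @run_unders col g d c e [::] Hca.
rewrite !cats0 Ed1 Hs tv_iter_n in Ed1'; case: Ed1' => Ed1'; subst d1.
have Eug : run col c0 (u1 ++ v) = Some g by rewrite (run_cat_some _ Ed).
exists col, c0; apply/andP; split.
  by rewrite /Closes (run_cat_some _ Ed) (run_cat_some _ Eg).
move: H2; rewrite /NT !has_cat => /orP[->//|/orP[H|/orP[->|/orP[H|->]]]]; rewrite ?orbT //.
all: have : has (fun x => ~~ eqv (col (lab x)) c0) (u1 ++ v).
all: try (apply: (moved Eug); apply/negP => Hdc;
  case/hasP: H => x /mapP[a Ha ->] /negP; apply; rewrite /lab /=;
  by apply: (eqv_trans _ Hdc); apply: Hca).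
all: by rewrite has_cat => /orP[->|->]; rewrite ?orbT.
Qed.
End VnSec.
Lemma B_tv (a2 a3 ex ey ez : bool) t Z d : ex (+) a2 = ey (+) a3 ->
  (if a3 then tv ey t (tv ez Z d) else tv ez Z (tv ey t d)) =
  (if a3 then tv ez (if a2 then tv ex t Z else tv (~~ ex) t Z) (tv ey t d)
   else tv ey t (tv ez (if a2 then tv ex t Z else tv (~~ ex) t Z) d)).
Proof.
case: t Z d => [t1 t2] [z1 z2] [d1 d2].
by case: a2; case: a3; case: ex; case: ey => //= _; case: ez;
  rewrite /tv /om /sg /=; congr (_, _); ring.
Qed.
Definition keys (w : seq letter) := map (fun q => (lab q, isover q)) w.

Lemma run_cat_ext col col' u v u' v' :
  (forall d, run col' d u' = run col d u) -> (forall d, run col' d v' = run col d v) ->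
  forall c, run col' c (u' ++ v') = run col c (u ++ v).
Proof.
by move=> Hu Hv c; rewrite !run_cat Hu; case: (run col c u) => //= d; rewrite Hv.
Qed.

Lemma run_mid col c p X q r : run col c (p ++ X ++ q) = Some r ->
  exists d r', run col d X = Some r'.
Proof.
rewrite run_cat; case: (run col c p) => [d|] //=; rewrite run_cat.
by case E: (run col d X) => [r'|] // _; exists d, r'.
Qed.

Lemma keys_in q w : q \in w -> (lab q, isover q) \in keys w.
Proof. by move=> Hq; apply: (map_f (fun q => (lab q, isover q))). Qed.

Lemma perm7 (u1 X1 u2 X2 u3 X3 u4 : seq letter) :
  perm_eq (u1 ++ X1 ++ u2 ++ X2 ++ u3 ++ X3 ++ u4) ((X1 ++ X2 ++ X3) ++ (u1 ++ u2 ++ u3 ++ u4)).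
Proof. apply/permP => P; rewrite !count_cat; lia. Qed.

Lemma rev2 (p q : letter) : rev [:: p; q] = [:: q; p].
Proof. by []. Qed.

Lemma col_R3 u1 X1 u2 X2 u3 X3 u4 T M B :
  uniq (keys (u1 ++ X1 ++ u2 ++ X2 ++ u3 ++ X3 ++ u4)) ->
  r3_config T M B -> perm_eq [:: X1; X2; X3] [:: T; M; B] ->
  Col (u1 ++ X1 ++ u2 ++ X2 ++ u3 ++ X3 ++ u4) ->
  Col (u1 ++ rev X1 ++ u2 ++ rev X2 ++ u3 ++ rev X3 ++ u4).
Proof.
move=> Hu [x [y [z [ex [ey [ez [a1 [a2 [a3 [[Hxyz ET EM EB] [S1 S2]]]]]]]]]]] Hp.
move=> [col [c0 /andP[H1 H2]]].
move: Hxyz; rewrite /= !inE negb_or => /andP[/andP[Hxy Hxz] /andP[Hyz _]].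
set old := u1 ++ X1 ++ u2 ++ X2 ++ u3 ++ X3 ++ u4.
set new := u1 ++ rev X1 ++ u2 ++ rev X2 ++ u3 ++ rev X3 ++ u4.
have Hon : perm_eq old new.
  rewrite /old /new; apply: perm_cat => //; apply: perm_cat; first by rewrite perm_sym perm_rev.
  apply: perm_cat => //; apply: perm_cat; first by rewrite perm_sym perm_rev.
  apply: perm_cat => //; apply: perm_cat => //; by rewrite perm_sym perm_rev.
have HmX : forall X, X \in [:: T; M; B] -> exists2 X', X' \in [:: X1; X2; X3] & X' = X.
  by move=> X HX; exists X => //; rewrite (perm_mem Hp).
have HXs : forall X, X \in [:: T; M; B] -> {subset X <= X1 ++ X2 ++ X3}.
  move=> X /HmX [X' +] <-; rewrite !inE => /or3P[] /eqP -> q Hq;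
  by rewrite !mem_cat Hq ?orbT.
have Hsub : {subset X1 ++ X2 ++ X3 <= old}.
  move=> q; rewrite /old !mem_cat => /or3P[] ->; by rewrite ?orbT.
have HzM : (z, true, ez) \in X1 ++ X2 ++ X3.
  apply: (HXs M); first by rewrite !inE eqxx orbT.
  by rewrite EM; case: (a2); rewrite ?mem_rev !inE eqxx ?orbT.
have HzB : (z, false, ez) \in X1 ++ X2 ++ X3.
  apply: (HXs B); first by rewrite !inE eqxx !orbT.
  by rewrite EB; case: (a3); rewrite ?mem_rev !inE eqxx ?orbT.
have HxT : (x, true, ex) \in X1 ++ X2 ++ X3.
  apply: (HXs T); first by rewrite !inE eqxx.
  by rewrite ET; case: (a1); rewrite ?mem_rev !inE eqxx ?orbT.
have Hperm : perm_eq old ((X1 ++ X2 ++ X3) ++ (u1 ++ u2 ++ u3 ++ u4)).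
  exact: perm7.
have Hzu : forall q, q \in u1 ++ u2 ++ u3 ++ u4 -> lab q != z.
  move=> q Hq; apply/eqP => Eq.
  move: Hu; rewrite (perm_uniq (perm_map _ Hperm)) map_cat cat_uniq => /and3P[_ /hasPn Hd _].
  have := Hd _ (keys_in Hq); rewrite Eq /=; case: (isover q).
    by rewrite (keys_in HzM).
  by rewrite (keys_in HzB).
have S : ex (+) a2 = ey (+) a3.
  by move: S1; clear; case: ex; case: ey; case: a1; case: a2; case: a3.
move: H1; rewrite /Closes; case Er: (run col c0 old) => [r|] // Hr.
have HT : T \in [:: X1; X2; X3] by rewrite (perm_mem Hp) !inE eqxx.
have [d [r' ErT]] : exists d r', run col d T = Some r'.
  move: HT; rewrite !inE => /or3P[] /eqP ET'; rewrite ET'.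
  - by move: Er; rewrite /old => /run_mid.
  - have : run col c0 ((u1 ++ X1 ++ u2) ++ X2 ++ (u3 ++ X3 ++ u4)) = Some r by rewrite -!catA.
    by move/run_mid.
  - have : run col c0 ((u1 ++ X1 ++ u2 ++ X2 ++ u3) ++ X3 ++ u4) = Some r by rewrite -!catA.
    by move/run_mid.
have Hcxy : eqv (col y) (col x).
  move: ErT; rewrite ET; case: (a1); rewrite ?rev2 /= /lab /isover /=.
    case E1: (eqv d (col y)) => //; case E2: (eqv d (col x)) => // _.
    by rewrite eqv_sym in E1; apply: eqv_trans E1 E2.
  case E1: (eqv d (col x)) => //; case E2: (eqv d (col y)) => // _.
  by rewrite eqv_sym in E2; apply: eqv_trans E2 E1.
pose Znew := if a2 then tv ex (col x) (col z) else tv (~~ ex) (col x) (col z).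
have HZn : Znew = (if a2 then tv ex (col x) (col z) else tv (~~ ex) (col x) (col z)) by [].
pose col' b := if b == z then Znew else col b.
have Hcx : col' x = col x by rewrite /col' (negbTE Hxz).
have Hcy : col' y = col y by rewrite /col' (negbTE Hyz).
have Hcz : col' z = Znew by rewrite /col' eqxx.
have Ecu : forall w, {subset w <= u1 ++ u2 ++ u3 ++ u4} -> forall d, run col' d w = run col d w.
  move=> w Hw dd; apply: run_ext => b /mapP[q Hq ->]; rewrite /col'.
  by rewrite (negbTE (Hzu _ (Hw _ Hq))).
have blkT : forall d, run col' d (rev T) = run col d T.
  move=> dd; rewrite ET; case: (a1); rewrite ?revK ?rev2 /= /lab /isover /= Hcx Hcy //;
  by case: (eqv dd (col x)); case: (eqv dd (col y)).
have blkM : forall d, run col' d (rev M) = run col d M.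
  move=> dd; rewrite EM; case: (a2) HZn => HZ; rewrite ?revK ?rev2 /= /lab /isover /sgn /= Hcx Hcz HZ eqv_tv_bij //.
  by rewrite tv_inv.
have blkB : forall d, run col' d (rev B) = run col d B.
  move=> dd; rewrite EB; case: (a3) (@B_tv a2 a3 ex ey ez (col x) (col z) dd S);
    move=> E; rewrite ?revK ?rev2 /= /lab /isover /sgn /= Hcy Hcz HZn !(eqv_tv _ _ Hcxy) E //.
have Hblk : forall X, X \in [:: T; M; B] -> forall d, run col' d (rev X) = run col d X.
  by move=> X; rewrite !inE => /or3P[] /eqP ->.
have HX : forall X, X \in [:: X1; X2; X3] -> X \in [:: T; M; B] by move=> X; rewrite (perm_mem Hp).
have Erun : run col' c0 new = run col c0 old.
  rewrite /new /old.
  apply: run_cat_ext; first by apply: Ecu => q Hq; rewrite mem_cat Hq.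
  apply: run_cat_ext; first by apply: Hblk; apply: HX; rewrite !inE eqxx.
  apply: run_cat_ext; first by apply: Ecu => q Hq; rewrite !mem_cat Hq !orbT.
  apply: run_cat_ext; first by apply: Hblk; apply: HX; rewrite !inE eqxx !orbT.
  apply: run_cat_ext; first by apply: Ecu => q Hq; rewrite !mem_cat Hq !orbT.
  apply: run_cat_ext; first by apply: Hblk; apply: HX; rewrite !inE eqxx !orbT.
  by apply: Ecu => q Hq; rewrite !mem_cat Hq !orbT.
exists col', c0; apply/andP; split; first by rewrite /Closes Erun Er.
case/hasP: H2 => q Hq Hnq.
have Hq' : q \in new by rewrite -(perm_mem Hon).
case: (eqVneq (lab q) z) => Eq; last first.
  by apply/hasP; exists q => //; rewrite /col' (negbTE Eq).
case EZ: (eqv Znew c0).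
  apply/hasP; exists (x, true, ex); first by rewrite -(perm_mem Hon); apply: Hsub.
  rewrite /lab /= Hcx; apply/negP => Htc; move/negP: Hnq; apply; rewrite Eq.
  have Htz : eqv (col x) Znew by apply: (eqv_trans Htc); rewrite eqv_sym.
  suff -> : col z = Znew by [].
  move: Htz; rewrite HZn; case: (a2) => Htz.
    by rewrite -{1}[col z](tv_inv ex (col x)) tv_fix.
  by rewrite -{1}[col z](tv_inv' ex (col x)) tv_fix.
apply/hasP; exists (z, true, ez); first by rewrite -(perm_mem Hon); apply: Hsub.
by rewrite /lab /= Hcz EZ.
Qed.
Lemma r3_rev T M B : r3_config T M B -> r3_config (rev T) (rev M) (rev B).
Proof.
move=> [x [y [z [ex [ey [ez [a1 [a2 [a3 [[Hxyz ET EM EB] [S1 S2]]]]]]]]]]].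
exists x, y, z, ex, ey, ez, (~~ a1), (~~ a2), (~~ a3); split.
  split => //; [rewrite ET|rewrite EM|rewrite EB]; by case: (a1); case: (a2); case: (a3); rewrite /= ?revK.
by move: S1 S2; clear; case: ex; case: ey; case: ez; case: a1; case: a2; case: a3.
Qed.

Lemma perm_R3 (u1 X1 u2 X2 u3 X3 u4 : seq letter) :
  perm_eq (u1 ++ X1 ++ u2 ++ X2 ++ u3 ++ X3 ++ u4) (u1 ++ rev X1 ++ u2 ++ rev X2 ++ u3 ++ rev X3 ++ u4).
Proof.
apply: perm_cat => //; apply: perm_cat; first by rewrite perm_sym perm_rev.
apply: perm_cat => //; apply: perm_cat; first by rewrite perm_sym perm_rev.
apply: perm_cat => //; apply: perm_cat => //; by rewrite perm_sym perm_rev.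
Qed.

Lemma col_R3_back u1 X1 u2 X2 u3 X3 u4 T M B :
  uniq (keys (u1 ++ X1 ++ u2 ++ X2 ++ u3 ++ X3 ++ u4)) ->
  r3_config T M B -> perm_eq [:: X1; X2; X3] [:: T; M; B] ->
  Col (u1 ++ rev X1 ++ u2 ++ rev X2 ++ u3 ++ rev X3 ++ u4) ->
  Col (u1 ++ X1 ++ u2 ++ X2 ++ u3 ++ X3 ++ u4).
Proof.
move=> Hu Hc Hp H.
have := @col_R3 u1 (rev X1) u2 (rev X2) u3 (rev X3) u4 (rev T) (rev M) (rev B).
rewrite !revK; apply => //.
- by rewrite -(perm_uniq (perm_map _ (perm_R3 u1 X1 u2 X2 u3 X3 u4))).
- exact: r3_rev.
- exact: (perm_map rev Hp).
Qed.

Definition WF w := uniq (keys w).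

Lemma perm3' (u X v : seq letter) : perm_eq (u ++ X ++ v) (X ++ (u ++ v)).
Proof. apply/permP => P; rewrite !count_cat; lia. Qed.
Lemma perm5 (u1 X v P u2 : seq letter) :
  perm_eq (u1 ++ X ++ v ++ P ++ u2) ((X ++ P) ++ (u1 ++ v ++ u2)).
Proof. apply/permP => Q; rewrite !count_cat; lia. Qed.

Lemma WF_perm w w' : perm_eq w w' -> WF w = WF w'.
Proof. by move=> H; rewrite /WF (perm_uniq (perm_map _ H)). Qed.

Lemma ins_uniq (Xs old : seq letter) :
  (forall q, q \in Xs -> lab q \notin labels old) -> uniq (keys Xs) ->
  WF (Xs ++ old) = WF old.
Proof.
move=> Hf HX; rewrite /WF /keys map_cat cat_uniq -/(keys Xs) HX /=.
have -> : has (mem (keys Xs)) (keys old) = false; last by [].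
apply/negbTE/hasPn => k /mapP[q Hq ->]; apply/negP => /mapP[q' Hq' [E _]].
by move: (Hf q' Hq'); rewrite -E (map_f lab Hq).
Qed.

Lemma WF_rl f w : injective f -> WF (rl f w) = WF w.
Proof.
move=> injf; rewrite /WF /keys /rl.
have -> : [seq (lab q, isover q) | q <- [seq (f (lab x), isover x, sgn x) | x <- w]]
   = map (fun k => (f k.1, k.2)) [seq (lab q, isover q) | q <- w] by rewrite -!map_comp.
rewrite map_inj_uniq // => [[k1 k2] [k3 k4]] /= [/injf -> ->] //.
Qed.
Section StepSec.
Variable n : nat.
Hypothesis Hn : n%:R = 0 :> R.

Definition Inv w := WF w /\ Col w.

Lemma keys_map_c (c : seq nat) o e : keys [seq (a, o, e) | a <- c] = [seq (a, o) | a <- c].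
Proof. by rewrite /keys -map_comp. Qed.

Lemma uniq_blocks (c : seq nat) o e e' : uniq c ->
  uniq (keys ([seq (a, o, e) | a <- c] ++ [seq (a, ~~ o, e') | a <- c])).
Proof.
move=> Hc; rewrite /keys map_cat -!/(keys _) !keys_map_c cat_uniq.
rewrite !map_inj_uniq //; last (by move=> a b []); last (by move=> a b []).
rewrite Hc andbT /=; apply/hasPn => k /mapP[a Ha ->]; apply/negP => /mapP[b Hb [_]].
by case: o.
Qed.

Lemma ws_inv w w' : welded_step w w' -> (Inv w <-> Inv w').
Proof.
case => {w w'}.
- move=> u v; rewrite /Inv (WF_perm (permEl (perm_catC u v))); split => [[? H]|[? H]]; split => //;
    exact: col_rot.
- move=> w f injf; rewrite /Inv -/(rl f w) WF_rl //; split => [[? H]|[? H]]; split => //.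
    exact: col_rl_fwd.
  exact: col_rl_back H.
- move=> u v a o e Ha; rewrite /Inv (WF_perm (perm3' u [:: (a, o, e); (a, ~~ o, e)] v)) (@ins_uniq [:: (a, o, e); (a, ~~ o, e)]); last first.
  + by rewrite /keys /= inE xpair_eqE eqxx /=; case: o.
  + by move=> q; rewrite !inE => /orP[] /eqP ->.
  split => [[? H]|[? H]]; split => //; [exact: col_R1_fwd | exact: col_R1_back H].
- move=> u1 v u2 a b e P Ha Hb Hab HP; rewrite /Inv (WF_perm (perm5 u1 [:: (a, true, e); (b, true, ~~ e)] v P u2)) (@ins_uniq ([:: (a, true, e); (b, true, ~~ e)] ++ P)); last first.
  + have Hba : (b == a) = false by rewrite eq_sym (negbTE Hab).
    case: HP => ->; rewrite /keys /lab /isover /= !inE !xpair_eqE /= (negbTE Hab) Hba /= ?andbF ?andbT //.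
  + by case: HP => -> q; rewrite !inE => /or4P[] /eqP ->.
  split => [[? H]|[? H]]; split => //; [exact: col_R2_fwd | exact: col_R2_back H].
- move=> u1 X1 u2 X2 u3 X3 u4 T M B Hc Hp; rewrite /Inv -(WF_perm (perm_R3 _ _ _ _ _ _ _)).
  split => [[Hw H]|[Hw H]]; split => //; [exact: col_R3 Hw Hc Hp H | exact: col_R3_back Hw Hc Hp H].
- move=> u v a b e f; rewrite /Inv.
  have Hper : perm_eq (u ++ (a, true, e) :: (b, true, f) :: v) (u ++ (b, true, f) :: (a, true, e) :: v).
    apply/permP => Q; rewrite !count_cat /=; lia.
  rewrite (WF_perm Hper); split => [[? H]|[? H]]; split => //; exact: col_oc H.
Qed.

Lemma vn_inv w w' : Vn_step n w w' -> (Inv w <-> Inv w').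
Proof.
case => {w w'} u1 v u2 c o e Hs Hu Hf.
rewrite /Inv (WF_perm (perm5 u1 [seq (a, o, e) | a <- c] v [seq (a, ~~ o, e) | a <- c] u2)).
rewrite (@ins_uniq ([seq (a, o, e) | a <- c] ++ [seq (a, ~~ o, e) | a <- c])); last first.
+ exact: uniq_blocks.
+ move=> q; rewrite mem_cat => /orP[] /mapP[a Ha ->]; exact: (allP Hf).
split => [[? H]|[? H]]; split => //; [exact: (col_Vn_fwd Hn o e Hs Hf H) | exact: (col_Vn_back Hn Hs H)].
Qed.

Lemma closure_inv w w' : Vn_equivalent n w w' -> (Inv w <-> Inv w').
Proof.
elim => {w w'}.
- by [].
- by move=> w w' [H|H]; [exact: ws_inv | exact: vn_inv].
- by move=> w w' _ H; split => /H.
- by move=> w1 w2 w3 _ H1 _ H2; split => [/H1/H2|/H2/H1].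
Qed.
End StepSec.
Lemma run_ov col c a e w : run col c ((a, true, e) :: w) = if eqv c (col a) then run col c w else None.
Proof. by []. Qed.
Lemma run_un col c a e w : run col c ((a, false, e) :: w) = run col (tv e (col a) c) w.
Proof. by []. Qed.

Definition colK (a : nat) : vec :=
  if a == 1%N then (1, 0) else if a == 2%N then (0, 1) else (1, 1).

Lemma Col_Kt : Col [:: (1%N, true, true); (2%N, false, true); (3%N, true, true);
                     (1%N, false, true); (2%N, true, true); (3%N, false, true)].
Proof.
have t1 : tv true (0, 1) (1, 0) = (1, 1) :> vec by rewrite /tv /om /sg /=; congr (_, _); ring.
have t2 : tv true (1, 0) (1, 1) = (0, 1) :> vec by rewrite /tv /om /sg /=; congr (_, _); ring.
have t3 : tv true (1, 1) (0, 1) = vneg (1, 0) :> vec by rewrite /tv /vneg /om /sg /=; congr (_, _); ring.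
have c1 : colK 1 = (1, 0) by [].
have c2 : colK 2 = (0, 1) by [].
have c3 : colK 3 = (1, 1) by [].
exists colK, (1, 0); apply/andP; split.
  rewrite /Closes run_ov c1 eqv_refl run_un c2 t1 run_ov c3 eqv_refl run_un c1 t2.
  rewrite run_ov c2 eqv_refl run_un c3 t3.
  change (is_true (eqv (vneg ((1 : R), (0 : R))) (1, 0))).
  by rewrite eqv_negl eqv_refl.
apply/hasP; exists (2%N, false, true); first by rewrite !inE eqxx !orbT.
rewrite /lab /= c2 /eqv /vneg !xpair_eqE oppr0 oner_eq0 !andbF //.
Qed.
End Alg.

Definition Kt : seq letter := [:: (1%N, true, true); (2%N, false, true); (3%N, true, true);
                     (1%N, false, true); (2%N, true, true); (3%N, false, true)].
Lemma gauss_Kt : gauss_word Kt.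
Proof.
move=> a Ha; exists true; move: Ha; rewrite /labels /= !inE.
by move=> /orP[/eqP->|/orP[/eqP->|/orP[/eqP->|/orP[/eqP->|/orP[/eqP->|/eqP->]]]]].
Qed.

Theorem proposition5p2 (n : nat) : 2 <= n ->
  exists K : seq letter, gauss_word K /\ ~ Vn_equivalent n K [::].
Proof.
move=> Hn2; exists Kt; split; first exact: gauss_Kt.
move=> H.
have Hz : (n%:R = 0 :> 'Z_n)%R := pchar_Zp Hn2.
have HW : WF Kt by [].
have [_ HC] := (closure_inv Hz H).1 (conj HW (Col_Kt 'Z_n)).
by case: HC => col [c /andP[_]].
Qed.
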